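(* Let $n\ge2$ and let $X_1,\dots,X_n$ be operators in a complex Hilbert space $\mathcal{H}$, each Hermitian or skew-Hermitian, defined on a common invariant domain $D$. Let $m$ be a sequence of positive numbers satisfying (A0), (A1), (A2) and (A3'): there is $L\ge1$ with $p\,m_{p-1}\le L\,m_p$ for all $p\ge1$; set $m^{(1)}=\dots=m^{(n)}=m$, $\mathbf{m}=(m,\dots,m)$ ($n$ entries), $\mathbf{m}'=(m,\dots,m)$ ($n-1$ entries), $\mathbf{X}=(X_1,\dots,X_n)$, $\mathbf{X}'=(X_1,\dots,X_{n-1})$. If $[X_j,X_n]\in\mathrm{span}\{X_1,\dots,X_n\}$ (on $D$) for every $j\in\{1,\dots,n-1\}$, then $u\in D$ belongs to $\mathcal{S}_{\mathbf{m}}(\mathbf{X})$ if and only if $u\in\mathcal{S}_{\mathbf{m}'}(\mathbf{X}')\cap\mathcal{S}_m(X_n)$.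
   Context: A common invariant domain $D$ means $D\subset\mathrm{Dom}(X_j)$ and $X_jD\subset D$ for all $j$. Notation: for $N\ge1$, $M(N)=\bigcup_{k\ge1}\{1,\dots,N\}^k$; for $\alpha=(i_1,\dots,i_k)$, $|\alpha|=k$, $|\alpha|_j=\mathrm{card}\{l:i_l=j\}$. For operators $\mathbf{Y}=(Y_1,\dots,Y_N)$, $\mathbf{Y}_\alpha=Y_{i_1}\cdots Y_{i_k}$ and $C^\infty(\mathbf{Y})=\{u: u\in\mathrm{Dom}(\mathbf{Y}_\alpha)\ \forall\alpha\in M(N)\}$. For sequences $\mathbf{p}=(p^{(1)},\dots,p^{(N)})$, $\mathbf{p}_\alpha=p^{(1)}_{|\alpha|_1}\cdots p^{(N)}_{|\alpha|_N}$ and $\mathcal{S}_{\mathbf{p}}(\mathbf{Y})=\{u\in C^\infty(\mathbf{Y}):\exists A,C>0,\ \|\mathbf{Y}_\alpha u\|\le CA^{|\alpha|}\mathbf{p}_\alpha\ \forall\alpha\in M(N)\}$ (for a single operator $Y$ and sequence $m$: $\|Y^ku\|\le CA^km_k$ for all $k\ge1$). Conditions: (A0) $m_0=m_1=1$; (A1) $m_p^2\le m_{p-1}m_{p+1}$ for $p\ge1$; (A2) there is $H>0$ with $m_{p+q}\le H^{p+q}m_pm_q$ for all $p,q\in\mathbb{N}$. *)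

(* Defs.v *)
From mathcomp Require Import all_boot all_order all_algebra.
From mathcomp Require Import all_reals.
From mathcomp Require Export complex.

Set Implicit Arguments.
Unset Strict Implicit.
Unset Printing Implicit Defensive.
Import Order.TTheory GRing.Theory Num.Theory.
Local Open Scope ring_scope.

Section Defs.
Variable R : realType.
Variable V : lmodType R[i].
Variable ip : V -> V -> R[i].

Definition hnorm (u : V) : R := Num.sqrt (complex.Re (ip u u)).

Definition is_inner_product : Prop :=
  [/\ (forall (a : R[i]) (u v w : V), ip (a *: u + v) w = a * ip u w + ip v w),
      (forall u v : V, ip u v = (ip v u)^*),
      (forall u : V, 0 <= ip u u) &
      (forall u : V, ip u u = 0 -> u = 0)].

Definition is_complete : Prop :=
  forall s : nat -> V,
    (forall e : R, 0 < e -> exists N, forall p q, (N <= p)%N -> (N <= q)%N ->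
        hnorm (s p - s q) < e) ->
    exists l : V, forall e : R, 0 < e -> exists N, forall p, (N <= p)%N ->
        hnorm (s p - l) < e.

Definition hilbert_space : Prop := is_inner_product /\ is_complete.

Definition subspace (D : V -> Prop) : Prop :=
  D 0 /\ forall (a : R[i]) u v, D u -> D v -> D (a *: u + v).

Definition linear_on (D : V -> Prop) (Y : V -> V) : Prop :=
  forall (a : R[i]) u v, D u -> D v -> Y (a *: u + v) = a *: Y u + Y v.

Definition hermitian_on (D : V -> Prop) (Y : V -> V) : Prop :=
  forall u v, D u -> D v -> ip (Y u) v = ip u (Y v).

Definition skew_hermitian_on (D : V -> Prop) (Y : V -> V) : Prop :=
  forall u v, D u -> D v -> ip (Y u) v = - ip u (Y v).

(* Y_alpha u = Y_{i1} (Y_{i2} ( ... (Y_{ik} u))) for alpha = [:: i1; ...; ik] *)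
Definition opword (N : nat) (Y : 'I_N -> V -> V) (alpha : seq 'I_N) (u : V) : V :=
  foldr (fun i w => Y i w) u alpha.

Definition seq_weight (N : nat) (p : 'I_N -> nat -> R) (alpha : seq 'I_N) : R :=
  \prod_(j < N) p j (count_mem j alpha).

(* S_p(Y) (for vectors where all Y_alpha u are defined; here operators are total) *)
Definition S_vec (N : nat) (Y : 'I_N -> V -> V) (p : 'I_N -> nat -> R) (u : V) : Prop :=
  exists A Cc : R, 0 < A /\ 0 < Cc /\
    forall alpha : seq 'I_N, (0 < size alpha)%N ->
      hnorm (opword Y alpha u) <= Cc * A ^+ size alpha * seq_weight p alpha.

Definition S_vec1 (Y : V -> V) (m : nat -> R) (u : V) : Prop :=
  exists A Cc : R, 0 < A /\ 0 < Cc /\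
    forall k : nat, (1 <= k)%N -> hnorm (iter k Y u) <= Cc * A ^+ k * m k.

End Defs.

Section SeqConds.
Variable R : realType.
Variable m : nat -> R.
Definition cond_A0 : Prop := m 0 = 1 /\ m 1 = 1.
Definition cond_A1 : Prop := forall p, (1 <= p)%N -> m p ^+ 2 <= m p.-1 * m p.+1.
Definition cond_A2 : Prop :=
  exists H : R, 0 < H /\ forall p q : nat, m (p + q) <= H ^+ (p + q) * m p * m q.
Definition cond_A3' : Prop :=
  exists L : R, 1 <= L /\ forall p : nat, (1 <= p)%N -> p%:R * m p.-1 <= L * m p.
End SeqConds.

(* Main.v *)
Require Import Defs.
From mathcomp Require Import all_boot all_order all_algebra all_reals complex.
From mathcomp Require Import ring lra zify.
From Stdlib Require Import IndefiniteDescription.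
Import Order.TTheory GRing.Theory Num.Theory.
Set Implicit Arguments.
Unset Strict Implicit.
Unset Printing Implicit Defensive.
Local Open Scope ring_scope.

Section SeqLemmas.
Variable R : realType.
Variable m : nat -> R.
Hypothesis Hmpos : forall p, 0 < m p.
Hypothesis HA0 : cond_A0 m.
Hypothesis HA1 : cond_A1 m.

Lemma ratio_mono p s : m p.+1 * m (p + s) <= m (p + s).+1 * m p.
Proof.
elim: s => [|s IH]; first by rewrite addn0 mulrC.
have h1 := @HA1 (p + s).+1 isT.
rewrite /= in h1.
have hp := Hmpos p; have hq := Hmpos (p + s); have hq1 := Hmpos (p+s).+1;
have hq2 := Hmpos (p+s).+2; have hp1 := Hmpos p.+1.
rewrite addnS.
(* m(p+1) m(q+1) <= m(q+2) m(p), from IH: m(p+1) m(q) <= m(q+1) m(p) and m(q+1)^2 <= m q m(q+2) *)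
have key : m p.+1 * m (p + s).+1 * (m (p + s) * m (p+s).+1) <=
           m (p + s).+2 * m p * (m (p + s) * m (p+s).+1).
  have e1 : m p.+1 * m (p + s).+1 * (m (p + s) * m (p+s).+1) =
            (m p.+1 * m (p + s)) * (m (p+s).+1 ^+ 2) by rewrite expr2; ring.
  have e2 : m (p + s).+2 * m p * (m (p + s) * m (p+s).+1) =
            (m (p+s).+1 * m p) * (m (p+s) * m (p+s).+2) by ring.
  rewrite e1 e2; apply: ler_pM => //.
  - by apply: mulr_ge0; apply: ltW.
  - by rewrite exprn_ge0 // ltW.
by rewrite ler_pM2r ?mulr_gt0 // in key.
Qed.

Lemma superadd a b : m a * m b <= m (a + b).
Proof.
elim: a => [|a IH]; first by rewrite add0n (proj1 HA0) mul1r.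
have h := ratio_mono a b.
have ha := Hmpos a; have ha1 := Hmpos a.+1; have hb := Hmpos b.
have hab := Hmpos (a + b); have hab1 := Hmpos (a+b).+1.
rewrite addSn.
have : m a.+1 * m b * m a <= m (a + b).+1 * m a.
  apply: le_trans h.
  by rewrite -mulrA ler_pM2l // mulrC.
by rewrite ler_pM2r.
Qed.

Lemma m_ge1 p : 1 <= m p.
Proof.
have := superadd 0 p.
elim: p => [|p IH] _; first by rewrite (proj1 HA0).
have := ratio_mono 0 p; rewrite !add0n (proj1 HA0) (proj2 HA0) mulr1 mul1r.
move=> h; apply: le_trans (IH (superadd 0 p)) h.
Qed.

Lemma prod_le_m (I : Type) (r : seq I) (f : I -> nat) :
  \prod_(i <- r) m (f i) <= m (\sum_(i <- r) f i).
Proof.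
elim: r => [|x r IH]; first by rewrite !big_nil (proj1 HA0).
rewrite !big_cons; apply: le_trans (superadd _ _).
rewrite ler_pM2l //.
Qed.
End SeqLemmas.


Section NC.
Variable R : realType.
Definition nc (z : R[i]) : R := complex.Re `|z|.

Lemma ncE z : `|z| = (nc z)%:C%C.
Proof. by rewrite /nc RRe_real // normr_real. Qed.

Lemma nc_ge0 z : 0 <= nc z.
Proof. by rewrite -ler0c -ncE. Qed.

Lemma ncD a b : nc (a + b) <= nc a + nc b.
Proof. by rewrite -lecR rmorphD /= -!ncE ler_normD. Qed.

Lemma ncM a b : nc (a * b) = nc a * nc b.
Proof. by apply: complexI; rewrite rmorphM /= -!ncE normrM. Qed.

Lemma ncN a : nc (- a) = nc a.
Proof. by apply: complexI; rewrite -!ncE normrN. Qed.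

Lemma ncJ a : nc (a^*) = nc a.
Proof. by apply: complexI; rewrite -!ncE norm_conjC. Qed.

Lemma nc_sum (I : Type) (r : seq I) (F : I -> R[i]) :
  nc (\sum_(i <- r) F i) <= \sum_(i <- r) nc (F i).
Proof.
elim: r => [|x r IH]; first by rewrite !big_nil /nc normr0.
by rewrite !big_cons; apply: le_trans (ncD _ _) _; rewrite lerD2l.
Qed.

Lemma Re_le_nc z : complex.Re z <= nc z.
Proof.
apply: le_trans (ler_norm _) _.
have := normc_ge_Re z; rewrite ncE lecR //.
Qed.

Lemma nc_real (x : R) : 0 <= x -> nc (x%:C%C) = x.
Proof. by move=> hx; apply: complexI; rewrite -ncE ger0_norm // ler0c. Qed.
End NC.


Section IP.
Variable R : realType.
Variable V : lmodType R[i].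
Variable ip : V -> V -> R[i].
Hypothesis Hip : is_inner_product ip.

Lemma ipDl a u v w : ip (a *: u + v) w = a * ip u w + ip v w.
Proof. by case: Hip. Qed.
Lemma ipC u v : ip u v = (ip v u)^*.
Proof. by case: Hip. Qed.
Lemma ip_ge0 u : 0 <= ip u u.
Proof. by case: Hip. Qed.

Lemma ipDr a u v w : ip w (a *: u + v) = a^* * ip w u + ip w v.
Proof. by rewrite ipC ipDl rmorphD rmorphM /= -!ipC. Qed.

Lemma ip0l w : ip 0 w = 0.
Proof.
have := ipDl (-1) 0 0 w; rewrite scaler0 addr0 mulN1r addNr //.
Qed.

Lemma ip0r w : ip w 0 = 0.
Proof. by rewrite ipC ip0l conjC0. Qed.

Lemma ip_real u : ip u u = (complex.Re (ip u u))%:C%C.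
Proof. by rewrite RRe_real // ger0_real // ip_ge0. Qed.

Lemma Re_ip_ge0 u : 0 <= complex.Re (ip u u).
Proof. by rewrite -ler0c -ip_real ip_ge0. Qed.

Lemma CS_C a b : `|ip a b| ^+ 2 <= ip a a * ip b b.
Proof.
have [B0|Bn0] := eqVneq (ip b b) 0.
  have -> : b = 0 by case: Hip => _ _ _; apply.
  by rewrite ip0r normr0 expr0n /= ip0l mulr0.
set Ab := ip a b; set B := ip b b.
have BJ : B^* = B by apply/eqP; rewrite -CrealE ger0_real // ip_ge0.
have Bge : 0 <= B by apply: ip_ge0.
have Bgt : 0 < B by rewrite lt_def Bn0.
set t := Ab / B.
have h := ip_ge0 ((- t) *: b + a).
rewrite ipDl !ipDr -/B -/Ab in h.
rewrite [ip b a]ipC -/Ab in h.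
rewrite rmorphN /= [t^*]rmorphM /= fmorphV /= BJ in h.
rewrite normCK.
have e : (- t) * ((- (Ab^* * B^-1)) * B + Ab^*) +
          ((- (Ab^* * B^-1)) * Ab + ip a a) = ip a a - Ab * Ab^* / B.
  rewrite /t; field; exact: Bn0.
rewrite e subr_ge0 in h.
by move: h; rewrite -(ler_pM2r Bgt) divfK.
Qed.

Lemma CS a b : nc (ip a b) <= hnorm ip a * hnorm ip b.
Proof.
have h := CS_C a b.
rewrite ncE [ip a a]ip_real [ip b b]ip_real -rmorphXn -rmorphM /= lecR in h.
rewrite /hnorm -sqrtrM ?Re_ip_ge0 //.
rewrite -(ger0_norm (nc_ge0 (ip a b))) -sqrtr_sqr.
by rewrite ler_sqrt // mulr_ge0 // Re_ip_ge0.
Qed.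

Lemma hnorm_ge0 u : 0 <= hnorm ip u.
Proof. exact: sqrtr_ge0. Qed.

Lemma hnorm_sq u : hnorm ip u ^+ 2 = complex.Re (ip u u).
Proof. by rewrite /hnorm sqr_sqrtr // Re_ip_ge0. Qed.
End IP.


Lemma size_index_enum_ord N : size (index_enum 'I_N) = N.
Proof. by rewrite /index_enum unlock -enumT -cardT card_ord. Qed.

Lemma sum_count_ord (N : nat) (b : seq 'I_N) :
  (\sum_(j < N) count_mem j b)%N = size b.
Proof.
elim: b => [|x b IH]; first by rewrite big1.
rewrite /= big_split /= IH -add1n; congr (_ + _)%N.
rewrite (bigD1 x) //= eqxx big1 // => j /negbTE.
by rewrite eq_sym => ->.
Qed.

Section Seq2.
Variable R : realType.
Variable m : nat -> R.
Hypothesis Hmpos : forall p, 0 < m p.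
Hypothesis HA0 : cond_A0 m.
Hypothesis HA1 : cond_A1 m.

Lemma weight_le (N : nat) (b : seq 'I_N) :
  seq_weight (fun _ => m) b <= m (size b).
Proof.
rewrite /seq_weight -sum_count_ord.
exact: (prod_le_m Hmpos HA0 HA1).
Qed.
End Seq2.

Section Seq3.
Variable R : realType.
Variable m : nat -> R.
Hypothesis Hmpos : forall p, 0 < m p.
Hypothesis HA0 : cond_A0 m.
Variable H : R.
Hypothesis H1 : 1 <= H.
Hypothesis HH : forall p q : nat, m (p + q) <= H ^+ (p + q) * m p * m q.

Lemma m_rev (I : Type) (r : seq I) (f : I -> nat) :
  m (\sum_(i <- r) f i)%N <= H ^+ (size r * \sum_(i <- r) f i)%N * \prod_(i <- r) m (f i).
Proof.
have H0 : 0 <= H by apply: le_trans H1.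
elim: r => [|x r IH]; first by rewrite !big_nil (proj1 HA0) expr0 mul1r.
rewrite !big_cons /=; set S := (\sum_(i <- r) f i)%N; set P := \prod_(i <- r) m (f i).
apply: le_trans (HH _ _) _.
have hP : 0 <= P by apply: prodr_ge0 => i _; apply: ltW.
have hfx := Hmpos (f x).
apply: (@le_trans _ _ (H ^+ (f x + S) * m (f x) * (H ^+ (size r * S) * P))).
  by apply: ler_wpM2l => //; apply: mulr_ge0; [apply: exprn_ge0|apply: ltW].
have -> : H ^+ (f x + S) * m (f x) * (H ^+ (size r * S) * P) =
   (H ^+ (f x + S) * H ^+ (size r * S)) * (m (f x) * P) by ring.
rewrite -exprD.
apply: ler_wpM2r; first by apply: mulr_ge0 => //; apply: ltW.
by apply: ler_weXn2l => //; nia.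
Qed.

Lemma m_le_weight (N : nat) (b : seq 'I_N) :
  m (size b) <= H ^+ (N * size b) * seq_weight (fun _ => m) b.
Proof.
rewrite /seq_weight -{1 2}sum_count_ord.
have := m_rev (index_enum 'I_N) (fun j => count_mem j b).
by rewrite size_index_enum_ord.
Qed.
End Seq3.

Lemma H_ge1 (R : realType) (m : nat -> R) (HA0 : cond_A0 m) (H : R) :
  (forall p q : nat, m (p + q) <= H ^+ (p + q) * m p * m q) -> 1 <= H.
Proof. move=> h; have := h 1%N 0%N; by rewrite (proj1 HA0) (proj2 HA0) !mulr1 expr1. Qed.

Section NumL.
Variable R : realType.

Lemma bern_up (x : R) (M : nat) : 0 <= x -> (1 + x) ^+ M * (1 - M%:R * x) <= 1.
Proof.
move=> hx; elim: M => [|M IH]; first by rewrite expr0 mul0r subr0 mulr1.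
have hp : 0 <= (1 + x) ^+ M by apply: exprn_ge0; lra.
apply: le_trans IH.
rewrite exprS -mulrA mulrCA; apply: ler_wpM2l => //.
have hM : 0 <= M%:R :> R by rewrite ler0n.
rewrite -natr1; nra.
Qed.

Lemma rho_pow (N : nat) : (0 < N)%N -> (1 + (2 * N%:R)^-1) ^+ N <= 2 :> R.
Proof.
move=> hN.
have hNr : 0 < N%:R :> R by rewrite ltr0n.
have hx : 0 <= (2 * N%:R)^-1 :> R by rewrite invr_ge0; lra.
have := bern_up N hx.
have -> : 1 - N%:R * (2 * N%:R)^-1 = 2^-1 :> R by field; lra.
move=> h; lra.
Qed.

Lemma succ_pow (N : nat) : ((N.+1)%:R) ^+ N <= 4 * (N%:R) ^+ N :> R.
Proof.
case: N => [|N]; first by rewrite !expr0; lra.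
set M := N.+1.
have hM : 0 < M%:R :> R by rewrite ltr0n.
set rho := 1 + (2 * M%:R)^-1 : R.
have hx : 0 <= (2 * M%:R)^-1 :> R by rewrite invr_ge0; lra.
have hr : 0 <= rho by rewrite /rho; lra.
have e1 : M.+1%:R <= M%:R * rho ^+ 2 :> R.
  have hy : 2 * M%:R * (2 * M%:R)^-1 = 1 :> R by rewrite mulfV //; lra.
  rewrite /rho -natr1 expr2; nra.
have hr2 : rho ^+ M <= 2 by apply: rho_pow.
apply: (@le_trans _ _ ((M%:R * rho ^+ 2) ^+ M)).
  by apply: lerXn2r => //; rewrite nnegrE ?ler0n // mulr_ge0 // ?ler0n // exprn_ge0.
rewrite exprMn mulrC; apply: ler_wpM2r; first by apply: exprn_ge0; rewrite ler0n.
rewrite -exprM mulnC exprM.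
have -> : 4 = 2 ^+ 2 :> R by rewrite expr2; lra.
apply: lerXn2r => //; rewrite nnegrE ?exprn_ge0 //; lra.
Qed.

Lemma pow_fact (N : nat) : (N%:R) ^+ N <= 4 ^+ N * (N`!)%:R :> R.
Proof.
elim: N => [|N IH]; first by rewrite !expr0 fact0 mulr1.
rewrite exprS factS natrM.
have h := succ_pow N.
have hN : 0 <= N%:R :> R by rewrite ler0n.
apply: (@le_trans _ _ (N.+1%:R * (4 * (N%:R) ^+ N))).
  by apply: ler_wpM2l; rewrite ?ler0n.
have -> : 4 ^+ N.+1 * (N.+1%:R * (N`!)%:R) = N.+1%:R * (4 * (4 ^+ N * (N`!)%:R)) :> R by rewrite exprS; ring.
by rewrite ler_wpM2l ?ler0n // ler_wpM2l.
Qed.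

Lemma fact_le_pow (l N : nat) : (l <= N)%N -> (l`! <= N ^ l)%N.
Proof.
elim: l => [|l IH] h; first by [].
rewrite factS expnS; apply: leq_mul => //; apply: IH; lia.
Qed.
End NumL.


Section Comb.
Local Open Scope nat_scope.
Variable n : nat.
Notation Z := (@ord_max n).
Notation wd := (widen_ord (leqnSn n)).
Definition isZ (x : 'I_n.+1) : bool := x == Z.

Fixpoint inv (s : seq 'I_n.+1) : nat :=
  match s with
  | [::] => 0
  | x :: s' => (~~ isZ x) * count isZ s' + inv s'
  end.

Lemma wd_neq (j : 'I_n) : isZ (wd j) = false.
Proof. by apply/eqP => /(congr1 val) /= h; have := ltn_ord j; rewrite h ltnn. Qed.

Lemma isZZ : isZ Z. Proof. exact: eqxx. Qed.

Lemma inv_cat s t : inv (s ++ t) = inv s + count (predC isZ) s * count isZ t + inv t.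
Proof.
elim: s => [|x s IH] /=; first by rewrite mul0n.
rewrite IH count_cat; case: (isZ x) => /=; lia.
Qed.

Lemma inv_le s : inv s <= size s * size s.
Proof.
elim: s => [|x s IH] //=.
have := count_size isZ s; case: (isZ x) => /=; nia.
Qed.

Lemma inv_swap s1 j s2 :
  inv (s1 ++ wd j :: Z :: s2) = (inv (s1 ++ Z :: wd j :: s2)).+1.
Proof.
rewrite !inv_cat /= !wd_neq isZZ /=; lia.
Qed.

Lemma inv_contr s1 j k s2 :
  inv (s1 ++ k :: s2) < inv (s1 ++ wd j :: Z :: s2).
Proof.
rewrite !inv_cat /= !wd_neq isZZ /=.
have := count_size isZ s2. case: (isZ k) => /=; nia.
Qed.

Lemma not_Z_wd (x : 'I_n.+1) : ~~ isZ x -> exists j : 'I_n, x = wd j.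
Proof.
move=> h; have hx : (x < n)%N.
  rewrite ltn_neqAle -ltnS ltn_ord andbT; apply: contra h => /eqP e.
  by apply/eqP; apply: val_inj.
by exists (Ordinal hx); apply: val_inj.
Qed.

Lemma count_map_wd (b : seq 'I_n) : count isZ (map wd b) = 0.
Proof.
by apply/eqP; rewrite -leqn0 leqNgt -has_count; apply/hasPn => y /mapP [z _ ->]; rewrite wd_neq.
Qed.

Lemma inv0_form s : inv s = 0 ->
  exists a (b : seq 'I_n), s = nseq a Z ++ map wd b.
Proof.
elim: s => [|x s IH] /=; first by move=> _; exists 0, [::].
move=> h; have [a [b e]] : exists a (b : seq 'I_n), s = nseq a Z ++ map wd b.
  by apply: IH; lia.
case hx: (isZ x).
  by exists a.+1, b; rewrite e; move/eqP: hx => ->.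
have [j ej] := not_Z_wd (negbT hx).
move: h; rewrite hx e count_cat count_nseq isZZ /=.
have -> : count isZ (map wd b) = 0.
  by apply/eqP; rewrite -leqn0 leqNgt -has_count; apply/hasPn => y /mapP [z _ ->]; rewrite wd_neq.
move=> h; have a0 : a = 0 by lia.
by exists 0, (j :: b); rewrite a0 /= ej.
Qed.

Lemma invpos_form s : 0 < inv s ->
  exists s1 (j : 'I_n) s2, s = s1 ++ wd j :: Z :: s2.
Proof.
elim: s => [|x s IH] //=.
case hs: (0 < inv s).
  move=> _; have [s1 [j [s2 e]]] := IH hs.
  by exists (x :: s1), j, s2; rewrite e.
move=> h; have i0 : inv s = 0 by lia.
have [a [b e]] := inv0_form i0.
case hx: (isZ x); first by move: h; rewrite hx /= i0.
have [j ej] := not_Z_wd (negbT hx).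
move: h; rewrite hx i0 e count_cat count_nseq isZZ count_map_wd /=.
case: a {e} => [|a] h; first by move: h; rewrite /= !muln0.
by exists [::], j, (nseq a Z ++ map wd b); rewrite ej.
Qed.
End Comb.


Section Ops.
Variable R : realType.
Variable V : lmodType R[i].
Variable ip : V -> V -> R[i].
Hypothesis Hip : is_inner_product ip.
Variable N : nat.
Variable X : 'I_N -> V -> V.
Variable D : V -> Prop.
Hypothesis HD : subspace D.
Hypothesis Hinv : forall j u, D u -> D (X j u).
Hypothesis Hlin : forall j, linear_on D (X j).
Hypothesis Hherm : forall j, hermitian_on ip D (X j) \/ skew_hermitian_on ip D (X j).

Lemma opword_cat s t u : opword X (s ++ t) u = opword X s (opword X t u).
Proof. by rewrite /opword foldr_cat. Qed.

Lemma opword_cons x s u : opword X (x :: s) u = X x (opword X s u).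
Proof. by []. Qed.

Lemma D_opword s u : D u -> D (opword X s u).
Proof. by move=> Du; elim: s => [|x s IH] //=; apply: Hinv. Qed.

Lemma DD u v : D u -> D v -> D (u + v).
Proof. by move=> hu hv; have := (proj2 HD) 1 u v hu hv; rewrite scale1r. Qed.

Lemma DZ a u : D u -> D (a *: u).
Proof. by move=> hu; have := (proj2 HD) a u 0 hu (proj1 HD); rewrite addr0. Qed.

Lemma D_sum (I : Type) (r : seq I) (c : I -> R[i]) (b : I -> V) :
  (forall i, D (b i)) -> D (\sum_(i <- r) c i *: b i).
Proof.
move=> hb; elim: r => [|x r IH]; first by rewrite big_nil; exact: (proj1 HD).
by rewrite big_cons; apply: (proj2 HD).
Qed.

Lemma opword_lin s : linear_on D (opword X s).
Proof.
elim: s => [|x s IH] a u v hu hv //=.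
by rewrite IH //; apply: Hlin; exact: D_opword.
Qed.

Lemma lin_add f u v : linear_on D f -> D u -> D v -> f (u + v) = f u + f v.
Proof. by move=> hf hu hv; have := hf 1 u v hu hv; rewrite !scale1r. Qed.

Lemma lin_zero f : linear_on D f -> f 0 = 0.
Proof.
move=> hf; have := hf 1 0 0 (proj1 HD) (proj1 HD).
rewrite !scale1r addr0 => h; apply: (addrI (f 0)); by rewrite addr0 -h.
Qed.

Lemma lin_sum f (I : Type) (r : seq I) (c : I -> R[i]) (b : I -> V) :
  linear_on D f -> (forall i, D (b i)) ->
  f (\sum_(i <- r) c i *: b i) = \sum_(i <- r) c i *: f (b i).
Proof.
move=> hf hb; elim: r => [|x r IH]; first by rewrite !big_nil lin_zero.
rewrite !big_cons hf // ?IH //; exact: D_sum.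
Qed.

Lemma ip_add w a b : ip w (a + b) = ip w a + ip w b.
Proof. by have := ipDr Hip 1 a b w; rewrite scale1r conjC1 mul1r. Qed.

Lemma ip_sum w (I : Type) (r : seq I) (c : I -> R[i]) (b : I -> V) :
  ip w (\sum_(i <- r) c i *: b i) = \sum_(i <- r) (c i)^* * ip w (b i).
Proof.
elim: r => [|x r IH]; first by rewrite !big_nil ip0r.
by rewrite !big_cons ipDr // IH.
Qed.

Lemma nc_ipC a b : nc (ip a b) = nc (ip b a).
Proof. by rewrite (ipC Hip) ncJ. Qed.

Lemma herm_nc j a b : D a -> D b -> nc (ip (X j a) b) = nc (ip a (X j b)).
Proof.
move=> ha hb; case: (Hherm j) => h; rewrite h //.
by rewrite ncN.
Qed.

Lemma transfer s a b : D a -> D b ->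
  nc (ip (opword X s a) b) = nc (ip a (opword X (rev s) b)).
Proof.
elim: s a b => [|x s IH] a b ha hb //=.
rewrite herm_nc; last 2 first.
- exact: D_opword.
- exact: hb.
rewrite IH //; last exact: Hinv.
by rewrite rev_cons -cats1 opword_cat.
Qed.
End Ops.


Section Core.
Variable R : realType.
Variable V : lmodType R[i].
Variable ip : V -> V -> R[i].
Hypothesis Hip : is_inner_product ip.
Variable n : nat.
Variable X : 'I_n.+1 -> V -> V.
Variable D : V -> Prop.
Hypothesis HD : subspace D.
Hypothesis Hinv : forall j u, D u -> D (X j u).
Hypothesis Hlin : forall j, linear_on D (X j).
Notation Z := (@ord_max n).
Notation wd := (widen_ord (leqnSn n)).
Variable c : 'I_n -> 'I_n.+1 -> R[i].
Hypothesis Hc : forall j v, D v ->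
  X (wd j) (X Z v) - X Z (X (wd j) v) = \sum_(k < n.+1) c j k *: X k v.
Variable u : V.
Hypothesis Du : D u.

Definition T (g : seq 'I_n.+1) : R := nc (ip u (opword X g u)).

Lemma T_ge0 g : 0 <= T g. Proof. exact: nc_ge0. Qed.

Lemma T_step s1 j s2 :
  T (s1 ++ wd j :: Z :: s2) <=
  T (s1 ++ Z :: wd j :: s2) + \sum_(k < n.+1) nc (c j k) * T (s1 ++ k :: s2).
Proof.
rewrite /T !opword_cat !opword_cons.
set v := opword X s2 u.
have Dv : D v by apply: (D_opword Hinv).
have e : X (wd j) (X Z v) = X Z (X (wd j) v) + \sum_(k < n.+1) c j k *: X k v.
  by rewrite -Hc // addrC subrK.
have OL := opword_lin Hinv Hlin s1.
rewrite e (lin_add OL); last 2 first.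
- by apply: Hinv; apply: Hinv.
- by apply: (D_sum HD) => k; apply: Hinv.
rewrite (lin_sum HD _ _ OL); last by move=> k; apply: Hinv.
rewrite (ip_add Hip) (ip_sum Hip).
apply: le_trans (ncD _ _) _; rewrite lerD2l.
apply: (le_trans (nc_sum _ _)).
by apply: ler_sum => k _; rewrite ncM ncJ opword_cat opword_cons.
Qed.

Variable m : nat -> R.
Hypothesis Hmpos : forall p, 0 < m p.
Variable L : R.
Hypothesis HL1 : 1 <= L.
Hypothesis HL : forall p : nat, (1 <= p)%N -> p%:R * m p.-1 <= L * m p.
Variable K0 A : R.
Hypothesis HK0 : 0 < K0.
Hypothesis HA : 0 < A.
Hypothesis Hbase : forall g, inv g = 0%N -> T g <= K0 * A ^+ size g * m (size g).

Definition Mc : R := \sum_(j < n) \sum_(k < n.+1) nc (c j k).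

Lemma Mc_ge0 : 0 <= Mc.
Proof. by apply: sumr_ge0 => j _; apply: sumr_ge0 => k _; apply: nc_ge0. Qed.

Lemma row_le_Mc j : \sum_(k < n.+1) nc (c j k) <= Mc.
Proof.
rewrite /Mc (bigD1 j) //= lerDl.
by apply: sumr_ge0 => i _; apply: sumr_ge0 => k _; apply: nc_ge0.
Qed.

Variable NN : nat.
Hypothesis HNN : (0 < NN)%N.

Definition B : R := A + 2 * Mc * L.
Definition rho : R := 1 + (2 * NN%:R)^-1.
Definition G (l : nat) : R := K0 * (B * NN%:R) ^+ l * m l / (l`!)%:R.
Definition F (l i : nat) : R := G l * rho ^+ i.

Lemma McL_ge0 : 0 <= 2 * Mc * L.
Proof.
have hL := HL1.
by apply: mulr_ge0; [apply: mulr_ge0; [lra|exact: Mc_ge0]|lra].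
Qed.

Lemma A_le_B : A <= B.
Proof. have := McL_ge0; rewrite /B; lra. Qed.

Lemma B_gt0 : 0 < B.
Proof. have := A_le_B; have := HA; lra. Qed.

Lemma NN_gt0 : 0 < NN%:R :> R. Proof. by rewrite ltr0n. Qed.

Lemma rho_ge1 : 1 <= rho.
Proof. rewrite /rho lerDl invr_ge0; have := NN_gt0; lra. Qed.

Lemma G_ge0 l : 0 <= G l.
Proof.
rewrite /G; apply: divr_ge0; last by rewrite ler0n.
apply: mulr_ge0; last exact: ltW.
apply: mulr_ge0; first exact: ltW.
apply: exprn_ge0; apply: mulr_ge0; [exact: ltW B_gt0|exact: ltW NN_gt0].
Qed.

Lemma F_mono l i i' : (i <= i')%N -> F l i <= F l i'.
Proof.
move=> h; rewrite /F; apply: ler_wpM2l; first exact: G_ge0.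
by apply: ler_weXn2l => //; exact: rho_ge1.
Qed.

Lemma base_G l : (l <= NN)%N -> K0 * A ^+ l * m l <= G l.
Proof.
move=> hl; rewrite /G.
have hf : 0 < (l`!)%:R :> R by rewrite ltr0n fact_gt0.
rewrite ler_pdivlMr //.
have -> : K0 * A ^+ l * m l * (l`!)%:R = (K0 * m l) * (A ^+ l * (l`!)%:R) by ring.
have -> : K0 * (B * NN%:R) ^+ l * m l = (K0 * m l) * (B * NN%:R) ^+ l by ring.
have hml := Hmpos l; have hK := HK0.
apply: ler_wpM2l; first by apply: mulr_ge0; apply: ltW.
apply: (@le_trans _ _ (B ^+ l * (NN ^ l)%N%:R)).
  apply: ler_pM.
  - by apply: exprn_ge0; apply: ltW.
  - by rewrite ler0n.
  - apply: lerXn2r; last exact: A_le_B.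
    + by rewrite nnegrE; apply: ltW.
    + by rewrite nnegrE; apply: ltW; exact: B_gt0.
  - by rewrite ler_nat fact_le_pow.
by rewrite natrX exprMn.
Qed.

Lemma G_shift l : B * NN%:R * G l <= L * G l.+1.
Proof.
rewrite /G.
have hf : 0 < (l`!)%:R :> R by rewrite ltr0n fact_gt0.
have hl1 : 0 < l.+1%:R :> R by rewrite ltr0n.
have hBN : 0 < B * NN%:R by apply: mulr_gt0; [exact: B_gt0|exact: NN_gt0].
set Q := K0 * (B * NN%:R) ^+ l.+1 / (l.+1`!)%:R.
have hQ : 0 <= Q.
  rewrite /Q; apply: divr_ge0; last by rewrite ler0n.
  apply: mulr_ge0; first exact: ltW.
  by apply: exprn_ge0; apply: ltW.
have e1 : B * NN%:R * (K0 * (B * NN%:R) ^+ l * m l / (l`!)%:R) = Q * (l.+1%:R * m l).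
  rewrite /Q factS natrM exprS; field.
  by apply/andP; split; apply/lt0r_neq0 => //; rewrite addrC natr1.
have e2 : L * (K0 * (B * NN%:R) ^+ l.+1 * m l.+1 / (l.+1`!)%:R) = Q * (L * m l.+1).
  by rewrite /Q; field; apply/lt0r_neq0; rewrite ltr0n fact_gt0.
rewrite e1 e2; apply: ler_wpM2l => //.
by have := HL (isT : (1 <= l.+1)%N).
Qed.

Lemma F_step l i : F l.+1 i + Mc * F l i <= F l.+1 i.+1.
Proof.
rewrite /F exprS.
have hr : 0 <= rho ^+ i by apply: exprn_ge0; have := rho_ge1; lra.
have hG := G_ge0 l.+1.
have hBN : 0 < B * NN%:R by apply: mulr_gt0; [exact: B_gt0|exact: NN_gt0].
have hN := NN_gt0.
have key : Mc * G l <= G l.+1 * (2 * NN%:R)^-1.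
  have h1 : Mc * (B * NN%:R * G l) <= Mc * (L * G l.+1).
    by apply: ler_wpM2l; [exact: Mc_ge0|exact: G_shift].
  have h2 : Mc * L <= B / 2 by have := McL_ge0; have := HA; rewrite /B; lra.
  have h3 : Mc * L * G l.+1 <= B / 2 * G l.+1 by apply: ler_wpM2r.
  rewrite -(ler_pM2r hBN).
  have -> : G l.+1 * (2 * NN%:R)^-1 * (B * NN%:R) = B / 2 * G l.+1.
    by field; lra.
  have -> : Mc * G l * (B * NN%:R) = Mc * (B * NN%:R * G l) by ring.
  apply: le_trans h1 _; rewrite mulrA; exact: h3.
have : Mc * G l * rho ^+ i <= G l.+1 * (2 * NN%:R)^-1 * rho ^+ i.
  by apply: ler_wpM2r.
rewrite /rho; lra.
Qed.

Lemma base_F g i : inv g = 0%N -> (size g <= NN)%N -> T g <= F (size g) i.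
Proof.
move=> h0 hs; apply: le_trans (Hbase h0) _.
apply: le_trans (base_G hs) _.
apply: le_trans (F_mono (size g) (leq0n i)).
by rewrite /F expr0 mulr1.
Qed.

Lemma core_bound l : (l <= NN)%N -> forall i g, size g = l -> (inv g <= i)%N -> T g <= F l i.
Proof.
elim: l => [|l IHl] hl.
  move=> i g hs hi; rewrite -hs; apply: base_F; last by rewrite hs.
  by move: g hs {hi} => [|x g].
elim=> [|i IHi] g hs hi.
  by rewrite -hs; apply: base_F; [lia|rewrite hs].
case hi': (inv g <= i)%N.
  by apply: le_trans (IHi g hs hi') _; apply: F_mono.
have hpos : (0 < inv g)%N by lia.
have [s1 [j [s2 eg]]] := invpos_form hpos.
have hinv : inv g = i.+1 by lia.
rewrite eg; apply: le_trans (T_step s1 j s2) _.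
apply: le_trans (F_step l i).
apply: lerD.
  apply: IHi.
    by move: hs; rewrite eg !size_cat /=.
  by move: hinv; rewrite eg inv_swap; lia.
apply: (@le_trans _ _ (\sum_(k < n.+1) nc (c j k) * F l i)).
  apply: ler_sum => k _; apply: ler_wpM2l; first exact: nc_ge0.
  apply: IHl; first by lia.
    by move: hs; rewrite eg !size_cat /=; lia.
  by have := inv_contr s1 j k s2; rewrite -eg; lia.
rewrite -mulr_suml; apply: ler_wpM2r; first by rewrite /F; apply: mulr_ge0;
  [exact: G_ge0|apply: exprn_ge0; have := rho_ge1; lra].
exact: row_le_Mc.
Qed.

Lemma F_final : F NN (NN * NN) <= K0 * (8 * B) ^+ NN * m NN.
Proof.
rewrite /F /G.
have hf : 0 < (NN`!)%:R :> R by rewrite ltr0n fact_gt0.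
have hB := B_gt0; have hK := HK0; have hm := Hmpos NN.
have h1 : (NN%:R) ^+ NN / (NN`!)%:R <= 4 ^+ NN :> R.
  by rewrite ler_pdivrMr //; apply: pow_fact.
have h2 : rho ^+ (NN * NN) <= 2 ^+ NN.
  rewrite exprM; apply: lerXn2r; rewrite ?nnegrE; last exact: rho_pow.
  + by apply: exprn_ge0; have := rho_ge1; lra.
  + lra.
have -> : K0 * (B * NN%:R) ^+ NN * m NN / (NN`!)%:R * rho ^+ (NN * NN) =
  (K0 * B ^+ NN * m NN) * ((NN%:R ^+ NN / (NN`!)%:R) * rho ^+ (NN * NN)).
  by rewrite exprMn; field; apply/lt0r_neq0.
have -> : K0 * (8 * B) ^+ NN * m NN = (K0 * B ^+ NN * m NN) * (4 ^+ NN * 2 ^+ NN).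
  have -> : (4 : R) ^+ NN * 2 ^+ NN = 8 ^+ NN.
    by rewrite -exprMn; congr (_ ^+ _); lra.
  by rewrite exprMn; ring.
apply: ler_wpM2l.
  by apply: mulr_ge0; [apply: mulr_ge0; [lra|apply: exprn_ge0; lra]|lra].
apply: ler_pM => //.
- by apply: divr_ge0; [apply: exprn_ge0; rewrite ler0n|lra].
- by apply: exprn_ge0; have := rho_ge1; lra.
Qed.
End Core.


Lemma opword_map (R : realType) (V : lmodType R[i]) (N M : nat) (Y : 'I_M -> V -> V)
  (f : 'I_N -> 'I_M) (b : seq 'I_N) u :
  opword Y (map f b) u = opword (fun j => Y (f j)) b u.
Proof. by elim: b => [|x b IH] //=; rewrite IH. Qed.

Lemma opword_nseq (R : realType) (V : lmodType R[i]) (M : nat) (Y : 'I_M -> V -> V) j k u :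
  opword Y (nseq k j) u = iter k (Y j) u.
Proof. by elim: k => [|k IH] //=; rewrite IH. Qed.

Lemma weight_map (R : realType) (n : nat) (m : nat -> R) (HA0 : cond_A0 m) (b : seq 'I_n) :
  seq_weight (fun _ => m) (map (widen_ord (leqnSn n)) b) = seq_weight (fun _ => m) b.
Proof.
rewrite /seq_weight big_ord_recr /=.
have -> : count_mem ord_max (map (widen_ord (leqnSn n)) b) = 0%N.
  by have := count_map_wd b; rewrite /isZ; under eq_count do rewrite eq_sym.
rewrite (proj1 HA0) mulr1; apply: eq_bigr => j _.
congr (m _); rewrite count_map; apply: eq_count => x /=.
by apply/eqP/eqP => [/(congr1 val) /= h|->] //; apply: val_inj.
Qed.

Lemma weight_nseq (R : realType) (n : nat) (m : nat -> R) (HA0 : cond_A0 m) k :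
  seq_weight (fun _ => m) (nseq k (@ord_max n)) = m k.
Proof.
rewrite /seq_weight big_ord_recr /= !count_nseq /= eqxx mul1n big1 ?mul1r //.
move=> j _; rewrite count_nseq.
have -> : pred1 (widen_ord (leqnSn n) j) ord_max = false by rewrite /= eq_sym; have := wd_neq j.
by rewrite mul0n (proj1 HA0).
Qed.

Theorem proposition3p3
  (R : realType) (V : lmodType R[i]) (ip : V -> V -> R[i])
  (Hhilb : hilbert_space ip)
  (n : nat) (hn : (1 <= n)%N)
  (X : 'I_n.+1 -> V -> V) (D : V -> Prop)
  (HD : subspace D)
  (Hinv : forall j u, D u -> D (X j u))
  (Hlin : forall j, linear_on D (X j))
  (Hherm : forall j, hermitian_on ip D (X j) \/ skew_hermitian_on ip D (X j))
  (m : nat -> R) (Hmpos : forall p, 0 < m p)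
  (HA0 : cond_A0 m) (HA1 : cond_A1 m) (HA2 : cond_A2 m) (HA3 : cond_A3' m)
  (Hcomm : forall j : 'I_n, exists c : 'I_n.+1 -> R[i], forall u, D u ->
      X (widen_ord (leqnSn n) j) (X ord_max u) - X ord_max (X (widen_ord (leqnSn n) j) u)
      = \sum_(k < n.+1) c k *: X k u)
  (u : V) (Du : D u) :
  S_vec ip X (fun _ => m) u <->
  (S_vec ip (fun j : 'I_n => X (widen_ord (leqnSn n) j)) (fun _ => m) u
   /\ S_vec1 ip (X ord_max) m u).
Proof.
have Hip : is_inner_product ip by case: Hhilb.
split.
  move=> [A [Cc [hA [hC hb]]]]; split.
    exists A, Cc; split => //; split => // b hb0.
    have := hb (map (widen_ord (leqnSn n)) b); rewrite size_map => /(_ hb0).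
    by rewrite opword_map weight_map.
  exists A, Cc; split => //; split => // k hk.
  have := hb (nseq k ord_max); rewrite size_nseq => /(_ hk).
  by rewrite opword_nseq weight_nseq.
move=> [[A1 [C1 [hA1 [hC1 h1]]]] [A2 [C2 [hA2 [hC2 h2]]]]].
have [c Hc] := functional_choice _ Hcomm.
have [L [HL1 HL]] := HA3.
have [H [_ HH]] := HA2.
have H1 : 1 <= H := H_ge1 HA0 HH.
set A := A1 + A2.
have hA : 0 < A by rewrite /A; lra.
set C0 := C1 + C2 + hnorm ip u + 1.
have hu0 := hnorm_ge0 ip u.
have hC0 : 0 < C0 by rewrite /C0; lra.
set K0 := C0 ^+ 2.
have hK0 : 0 < K0 by rewrite /K0 exprn_gt0.
have bZ : forall a, hnorm ip (opword X (nseq a ord_max) u) <= C0 * A ^+ a * m a.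
  case=> [|a].
    by rewrite /= expr0 mulr1 (proj1 HA0) mulr1 /C0; lra.
  rewrite opword_nseq; apply: le_trans (h2 a.+1 isT) _.
  have hm := Hmpos a.+1.
  apply: ler_wpM2r; first exact: ltW.
  apply: ler_pM; first exact: ltW.
  - by apply: exprn_ge0; apply: ltW.
  - by rewrite /C0; lra.
  - apply: lerXn2r; rewrite ?nnegrE; try lra.
    by rewrite /A; lra.
have bX : forall b : seq 'I_n,
    hnorm ip (opword X (map (widen_ord (leqnSn n)) b) u) <= C0 * A ^+ size b * m (size b).
  case=> [|x b].
    by rewrite /= expr0 mulr1 (proj1 HA0) mulr1 /C0; lra.
  rewrite opword_map; apply: le_trans (h1 (x :: b) isT) _.
  have hw := weight_le Hmpos HA0 HA1 (x :: b).
  have hm := Hmpos (size (x :: b)).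
  have hw0 : 0 <= seq_weight (fun _ => m) (x :: b).
    by apply: prodr_ge0 => j _; apply: ltW.
  apply: ler_pM => //.
  - by apply: mulr_ge0; [lra|apply: exprn_ge0; lra].
  apply: ler_pM; first lra.
  - by apply: exprn_ge0; apply: ltW.
  - by rewrite /C0; lra.
  - apply: lerXn2r; rewrite ?nnegrE; try lra.
    by rewrite /A; lra.
have Hbase : forall g, inv g = 0%N -> T ip X u g <= K0 * A ^+ size g * m (size g).
  move=> g /inv0_form [a [b ->]].
  rewrite /T opword_cat.
  set w := opword X (map (widen_ord (leqnSn n)) b) u.
  have Dw : D w by apply: (D_opword Hinv).
  rewrite (nc_ipC Hip) (transfer Hinv Hherm) // ?(D_opword Hinv) // (nc_ipC Hip).
  rewrite rev_nseq.
  apply: le_trans (CS Hip _ _) _.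
  rewrite size_cat size_nseq size_map.
  apply: (@le_trans _ _ ((C0 * A ^+ a * m a) * (C0 * A ^+ size b * m (size b)))).
    apply: ler_pM; [exact: hnorm_ge0|exact: hnorm_ge0|exact: bZ|exact: bX].
  have -> : C0 * A ^+ a * m a * (C0 * A ^+ size b * m (size b)) =
     K0 * A ^+ (a + size b) * (m a * m (size b)) by rewrite /K0 exprD; ring.
  apply: ler_wpM2l; first by apply: mulr_ge0; [lra|apply: exprn_ge0; lra].
  exact: superadd.
set Bv := B c L A.
have hB : 0 < Bv by apply: B_gt0.
set Q := 8 * Bv * H * H ^+ n.+1.
have hH0 : 0 < H by lra.
have hQ : 0 < Q by rewrite /Q; apply: mulr_gt0; [apply: mulr_gt0; [lra|lra]|apply: exprn_gt0].
exists Q, C0; split => //; split => // al hal.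
set k := size al.
set NN := (k + k)%N.
have hNN : (0 < NN)%N by rewrite /NN; lia.
have hs : size (rev al ++ al) = NN by rewrite size_cat size_rev.
have hi : (inv (rev al ++ al) <= NN * NN)%N by rewrite -hs; apply: inv_le.
have hcore := @core_bound R V ip Hip n X D HD Hinv Hlin c Hc u Du m Hmpos L HL1 HL K0 A
   hK0 hA Hbase NN hNN NN (leqnn NN) (NN * NN)%N (rev al ++ al) hs hi.
have hfin := @F_final R n c m Hmpos L HL1 K0 A hK0 hA NN hNN.
set w := opword X al u.
have Dw : D w by apply: (D_opword Hinv).
have hT : hnorm ip w ^+ 2 <= K0 * (8 * Bv) ^+ NN * m NN.
  rewrite (hnorm_sq Hip); apply: le_trans (Re_le_nc _) _.
  rewrite (transfer Hinv Hherm) //.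
  have -> : opword X (rev al) w = opword X (rev al ++ al) u by rewrite opword_cat.
  exact: le_trans hcore hfin.
set sw := seq_weight (fun _ => m) al.
have hsw : 0 <= sw by apply: prodr_ge0 => j _; apply: ltW.
have hmk : m k <= H ^+ (n.+1 * k) * sw by apply: m_le_weight.
have hmN : m NN <= H ^+ NN * m k * m k by apply: HH.
have hmk0 := Hmpos k.
have hsq : hnorm ip w ^+ 2 <= (C0 * Q ^+ k * sw) ^+ 2.
  apply: le_trans hT _.
  have hE : 0 <= K0 * (8 * Bv) ^+ NN by apply: mulr_ge0; [lra|apply: exprn_ge0; lra].
  apply: (@le_trans _ _ (K0 * (8 * Bv) ^+ NN * (H ^+ NN * m k * m k))).
    by apply: ler_wpM2l.
  apply: (@le_trans _ _ (K0 * (8 * Bv) ^+ NN * (H ^+ NN * (H ^+ (n.+1 * k) * sw) * (H ^+ (n.+1 * k) * sw)))).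
    apply: ler_wpM2l => //.
    have hHN : 0 <= H ^+ NN by apply: exprn_ge0; lra.
    apply: ler_pM => //.
    - by apply: mulr_ge0 => //; lra.
    - lra.
    - by apply: ler_wpM2l.
  have -> : (C0 * Q ^+ k * sw) ^+ 2 =
    K0 * (8 * Bv) ^+ NN * (H ^+ NN * (H ^+ (n.+1 * k) * sw) * (H ^+ (n.+1 * k) * sw)).
    have eQ : Q ^+ k = (8 * Bv) ^+ k * H ^+ k * H ^+ (n.+1 * k).
      by rewrite /Q !exprMn exprM.
    rewrite eQ /NN !exprD /K0; ring.
  by [].
rewrite -ler_sqr ?nnegrE //; first exact: hnorm_ge0.
by apply: mulr_ge0 => //; apply: mulr_ge0; [lra|apply: exprn_ge0; lra].
Qed.
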